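(* Let $r=r(n)\ge 2$ with $r=o(n^{1/2})$. Then $\Pr(\mathcal C\mid\mathcal A_2)=o(1)$ as $n\to\infty$, where $\mathcal C$ is the event that a third edge $e_3$ is chosen, $e_3\supseteq e_1\cap e_2$, and $e_3$ contains at least one vertex of $(e_1\setminus e_2)\cup(e_2\setminus e_1)$.
   Context: Random intersecting process: Let $[n]=\{1,\dots,n\}$ and $\binom{[n]}{r}$ the family of $r$-subsets of $[n]$. Choose $e_1$ uniformly at random from $\binom{[n]}{r}$. Given $\mathcal F_i=\{e_1,\dots,e_i\}$, let $\mathcal A(\mathcal F_i)=\{e\in\binom{[n]}{r}: e\notin\mathcal F_i,\ e\cap e_j\neq\emptyset \text{ for all } 1\le j\le i\}$, and choose $e_{i+1}$ uniformly at random from $\mathcal A(\mathcal F_i)$. The process halts when $\mathcal A(\mathcal F_i)=\emptyset$. $\mathcal A_2$ is the event that at least two edges are chosen and $|e_1\cap e_2|=1$. *)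

(* Defs.v *)
From HB Require Import structures.
From mathcomp Require Import all_boot all_order all_algebra.
Unset Printing Implicit Defensive.
Import Order.TTheory GRing.Theory Num.Theory.
Local Open Scope ring_scope.

(* A(F): r-subsets of [n] (modelled as 'I_n) not in F meeting every edge of F.
   For F = [::] this is all r-subsets, the law of e_1. *)
Definition adm (n r : nat) (F : seq {set 'I_n}) : {set {set 'I_n}} :=
  [set e : {set 'I_n} | [&& #|e| == r, e \notin F & all (fun f => e :&: f != set0) F]].

Definition pstep (n r : nat) (F : seq {set 'I_n}) : rat := (#|adm n r F|%:R)^-1.

Definition PrA2 (n r : nat) : rat :=
  \sum_(e1 in adm n r [::])
    \sum_(e2 in adm n r [:: e1] | #|e1 :&: e2| == 1%N)
      pstep n r [::] * pstep n r [:: e1].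

Definition eventC {n : nat} (e1 e2 e3 : {set 'I_n}) : bool :=
  (e1 :&: e2 \subset e3) && (e3 :&: ((e1 :\: e2) :|: (e2 :\: e1)) != set0).

Definition PrCA2 (n r : nat) : rat :=
  \sum_(e1 in adm n r [::])
    \sum_(e2 in adm n r [:: e1] | #|e1 :&: e2| == 1%N)
      \sum_(e3 in adm n r [:: e1; e2] | eventC e1 e2 e3)
        pstep n r [::] * pstep n r [:: e1] * pstep n r [:: e1; e2].

Definition PrC_given_A2 (n r : nat) : rat := PrCA2 n r / PrA2 n r.

(* Main.v *)
Require Import Defs.
From HB Require Import structures.
From mathcomp Require Import all_boot all_order all_algebra.
From mathcomp Require Import zify.
From mathcomp Require Import ring lra.
Import Order.TTheory GRing.Theory Num.Theory.

Lemma card_bigcup_seq (T I : finType) (s : seq I) (F : I -> {set T}) :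
  (#|\bigcup_(i <- s) F i| <= \sum_(i <- s) #|F i|)%N.
Proof.
elim: s => [|a s IH]; first by rewrite !big_nil cards0.
rewrite !big_cons cardsU; apply: leq_trans (leq_subr _ _) _.
by rewrite leq_add2l.
Qed.

Lemma pairs_bound n r (u v : 'I_n) : u != v -> (2 <= r)%N ->
  (#|[set S : {set 'I_n} | (#|S| == r) && ([set u; v] \subset S)]| <= 'C(n - 2, r - 2))%N.
Proof.
move=> uv r2.
set B := ~: [set u; v].
have cB : #|B| = (n - 2)%N by move: (cardsC [set u; v]); rewrite cards2 uv card_ord -/B; lia.
rewrite -cB -cards_draws.
apply: leq_trans (leq_imset_card (fun S => S :|: [set u; v]) _).
apply: subset_leq_card; apply/subsetP => T; rewrite inE => /andP[/eqP cT sT].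
apply/imsetP; exists (T :\: [set u; v]).
  rewrite inE; apply/andP; split.
    by apply/subsetP => x; rewrite !inE => /andP[-> _].
  rewrite cardsD (setIidPr sT) cards2 uv cT; lia.
apply/setP => x; rewrite !inE.
case: (x =P u) => [->|_]; first by rewrite (subsetP sT) // !inE eqxx.
case: (x =P v) => [->|_]; first by rewrite (subsetP sT) // !inE eqxx orbT.
rewrite /=.
by rewrite orbF.
Qed.

Lemma vsets_bound n r (v : 'I_n) (e1 e2 : {set 'I_n}) : v \in e1 -> v \in e2 -> (1 <= r)%N ->
  ('C(n - 1, r - 1) <= #|adm n r [:: e1; e2]| + 2)%N.
Proof.
move=> v1 v2 r1.
set B := [set~ v].
have cB : #|B| = (n - 1)%N by move: (cardsC1 v); rewrite card_ord -/B; lia.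
rewrite -cB -cards_draws.
set D := [set A : {set 'I_n} | A \subset B & #|A| == (r - 1)%N].
have vS : forall S : {set 'I_n}, S \subset B -> v \notin S.
  by move=> S sS; apply/negP => /(subsetP sS); rewrite !inE eqxx.
have -> : #|D| = #|[set v |: S | S in D]|.
  rewrite card_in_imset // => S1 S2; rewrite !inE => /andP[s1 _] /andP[s2 _] e.
  apply/setP => x; move/setP: e => /(_ x); rewrite !inE.
  case: (x =P v) => [->|] //=.
  by rewrite (negbTE (vS _ s1)) (negbTE (vS _ s2)).
set V := [set _ |: _ | _ in _].
rewrite -(cardsID [set e1; e2] V).
rewrite addnC leq_add //.
  apply: subset_leq_card; apply/subsetP => T; rewrite inE => /andP[Tn /imsetP[S]].
  rewrite inE => /andP[sB /eqP cS] eT; subst T.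
  move: Tn; rewrite !inE negb_or => /andP[n1 n2].
  rewrite cardsU1 cS (vS _ sB) n1 n2 /= andbT.
  apply/andP; split; first by apply/eqP; lia.
  by apply/andP; split; apply/set0Pn; exists v; rewrite !inE eqxx.
rewrite setIC; apply: leq_trans (subset_leq_card (subsetIl _ _)) _.
by rewrite cards2; case: (_ != _).
Qed.

Lemma C_bound n r (e1 e2 : {set 'I_n}) : #|e1| = r -> #|e2| = r ->
  #|e1 :&: e2| = 1%N -> (2 <= r)%N ->
  (#|[set e3 in adm n r [:: e1; e2] | eventC e1 e2 e3]| <= (2*(r-1)) * 'C(n-2, r-2))%N.
Proof.
move=> c1 c2 /eqP/cards1P[v ev] r2.
set D := (e1 :\: e2) :|: (e2 :\: e1).
have cD : (#|D| <= 2 * (r - 1))%N.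
  rewrite cardsU; apply: leq_trans (leq_subr _ _) _.
  rewrite !cardsD [e2 :&: e1]setIC ev cards1 c1 c2; lia.
have vD : v \notin D.
  have : v \in e1 :&: e2 by rewrite ev inE.
  by rewrite !inE => /andP[-> ->].
set P := fun u : 'I_n => [set S : {set 'I_n} | (#|S| == r) && ([set u; v] \subset S)].
apply: (@leq_trans #|\bigcup_(u <- enum D) P u|).
  apply: subset_leq_card; apply/subsetP => T; rewrite !inE => /andP[/and3P[/eqP cT _ _]].
  rewrite /eventC ev sub1set => /andP[vT /set0Pn[u]].
  rewrite inE => /andP[uT uD].
  rewrite bigcup_seq; apply/bigcupP; exists u; first by rewrite mem_enum.
  rewrite inE cT eqxx /=; apply/subsetP => x; rewrite !inE => /orP[]/eqP-> //.
apply: leq_trans (card_bigcup_seq _ _ _ _) _.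
apply: (@leq_trans (\sum_(u <- enum D) 'C(n-2, r-2))).
  rewrite big_seq [X in (_ <= X)%N]big_seq; apply: leq_sum => u; rewrite mem_enum => uD.
  apply: pairs_bound => //; apply/eqP => uv; move: vD; by rewrite -uv uD.
rewrite big_const_seq count_predT -cardE iter_addn_0 mulnC leq_mul2r cD orbT //.
Qed.

Local Open Scope ring_scope.
Lemma arith (c a X Y q m eps : rat) : 0 < eps -> 1 <= q -> 1 <= X -> 0 <= a ->
  c <= 2 * q * X -> Y <= a + 2 -> m * X = q * Y ->
  8 * (q+1)^+2 <= eps * (m+1) -> 8 * (q+1)^+2 <= m + 1 ->
  c <= eps * a.
Proof.
move=> he hq hX ha hc hY hm h1 h2.
have s1 : q * c <= eps * (m+1) * X / 4.
  have : q * c <= 2 * (q+1)^+2 * X by nra.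
  move=> h; apply: le_trans h _.
  have : 0 <= X by lra.
  nra.
have s2' : m * X - 2 * q <= q * a.
  rewrite hm; have : q * Y <= q * (a + 2) by rewrite ler_pM2l //; lra.
  lra.
have s2 : eps * (m * X - 2 * q) <= eps * (q * a) by rewrite ler_pM2l.
have s3 : (m+1) * X / 4 <= m * X - 2 * q by nra.
have : q * c <= q * (eps * a) by nra.
rewrite ler_pM2l //; lra.
Qed.

Lemma pair_bound n r (eps : rat) (e1 e2 : {set 'I_n}) : 0 < eps -> (2 <= r)%N ->
  (8 * r ^ 2 <= n)%N -> 8 * (r ^ 2)%:R <= eps * n%:R ->
  #|e1| = r -> #|e2| = r -> #|e1 :&: e2| = 1%N ->
  #|[set e3 in adm n r [:: e1; e2] | eventC e1 e2 e3]|%:R <= eps * #|adm n r [:: e1; e2]|%:R.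
Proof.
move=> he r2 hn1 hn2 c1 c2 c12.
have hC := @C_bound n r e1 e2 c1 c2 c12 r2.
have [v ev] : exists v, e1 :&: e2 = [set v] by apply/cards1P/eqP.
have hv : v \in e1 :&: e2 by rewrite ev inE.
move: hv; rewrite inE => /andP[v1 v2].
have hY := @vsets_bound n r v e1 e2 v1 v2 (ltnW r2).
have hr : (r <= n)%N by apply: leq_trans hn1; rewrite expnS; nia.
have hdiag : ((n - 1) * 'C(n - 2, r - 2) = (r - 1) * 'C(n - 1, r - 1))%N.
  have := mul_bin_diag (n - 1) (r - 2).
  have -> : (n - 1).-1 = (n - 2)%N by lia.
  by have -> : (r - 2).+1 = (r - 1)%N by lia.
have hX : (1 <= 'C(n - 2, r - 2))%N by rewrite bin_gt0; lia.
apply: (@arith _ _ 'C(n - 2, r - 2)%:R 'C(n - 1, r - 1)%:R (r - 1)%:R (n - 1)%:R) => //.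
- by rewrite ler1n; lia.
- by rewrite ler1n.
- by rewrite -(natrM _ 2) -natrM ler_nat.
- by rewrite -natrD ler_nat.
- by rewrite -!natrM hdiag.
- have -> : (r - 1)%:R + 1 = r%:R :> rat by rewrite natrB ?subrK //; lia.
  have -> : (n - 1)%:R + 1 = n%:R :> rat by rewrite natrB ?subrK //; lia.
  by rewrite natrX in hn2.
- have -> : (r - 1)%:R + 1 = r%:R :> rat by rewrite natrB ?subrK //; lia.
  have -> : (n - 1)%:R + 1 = n%:R :> rat by rewrite natrB ?subrK //; lia.
  by rewrite -natrX -(natrM _ 8) ler_nat.
Qed.

Theorem lemma4 (r : nat -> nat)
  (hr2 : forall n : nat, (2 <= r n)%N)
  (hro : forall eps : rat, 0 < eps ->
           exists N : nat, forall n : nat, (N <= n)%N ->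
             ((r n) ^ 2)%:R <= eps * n%:R) :
  forall eps : rat, 0 < eps ->
    exists N : nat, forall n : nat, (N <= n)%N ->
      PrC_given_A2 n (r n) <= eps.
Proof.
move=> eps he.
have [N1 h1] := hro (eps / 8) ltac:(by rewrite divr_gt0).
have [N2 h2] := hro (1 / 8) ltac:(by []).
exists (maxn N1 N2) => n; rewrite geq_max => /andP[n1 n2].
have {h1}h1 := h1 n n1; have {h2}h2 := h2 n n2.
set R := r n in h1 h2 *.
have hn1 : (8 * R ^ 2 <= n)%N.
  rewrite -(ler_nat rat) natrM; move: h2; lra.
have hn2 : 8 * (R ^ 2)%:R <= eps * n%:R by move: h1; lra.
have pge0 : forall F, 0 <= pstep n R F by move=> F; rewrite /pstep invr_ge0.
have key : PrCA2 n R <= eps * PrA2 n R.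
  rewrite /PrCA2 /PrA2 mulr_sumr; apply: ler_sum => e1; rewrite inE => /and3P[/eqP c1 _ _].
  rewrite mulr_sumr; apply: ler_sum => e2 /andP[]; rewrite inE => /and3P[/eqP c2 _ _] /eqP i12.
  rewrite (eq_bigl (fun e3 => e3 \in [set e3 in adm n R [:: e1; e2] | eventC e1 e2 e3])); last first.
    by move=> e3; rewrite inE.
  rewrite sumr_const -mulr_natr -mulrA [eps * _]mulrC ler_wpM2l ?mulr_ge0 //.
  have hb := @pair_bound n R eps e1 e2 he (hr2 n) hn1 hn2 c1 c2 i12.
  rewrite /pstep; set a := #|adm n R [:: e1; e2]|%:R in hb *.
  have [a0|a0] := eqVneq a 0; first by rewrite a0 invr0 mul0r ltW.
  have ap : 0 < a by rewrite lt0r a0 /a ler0n.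
  by rewrite mulrC ler_pdivrMr.
rewrite /PrC_given_A2.
have pa : 0 <= PrA2 n R.
  by apply: sumr_ge0 => e1 _; apply: sumr_ge0 => e2 _; apply: mulr_ge0.
have [a0|a0] := eqVneq (PrA2 n R) 0; first by rewrite a0 invr0 mulr0 ltW.
have ap : 0 < PrA2 n R by rewrite lt0r a0 pa.
by rewrite ler_pdivrMr // mulrC.
Qed.
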